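(* Let $\iota$ be the base type. There is no closed term $\cdot\vdash t:\iota\to\Diamond\iota$ in $\lambda^{S}$ or in $\lambda^{SJ}$ (so axiom R, $A\to\Diamond A$, is not derivable in these calculi), and there is no closed term $\cdot\vdash t:\Diamond\Diamond\iota\to\Diamond\iota$ in $\lambda^{S}$ or in $\lambda^{SR}$ (so axiom J, $\Diamond\Diamond A\to\Diamond A$, is not derivable in these calculi).
   Context: Types: $A,B ::= \iota \mid 1 \mid A\times B \mid A\to B \mid \Diamond A$ ($\iota$ a base type); contexts are lists of distinct typed variables, $\cdot$ the empty context. Simply typed terms: variables, $()$, $\langle t,u\rangle$, $\mathsf{fst}\,t$, $\mathsf{snd}\,t$, $\lambda x.t$, $t\,u$ with the standard typing rules. Modal term formers: (letmap) if $\Gamma\vdash t:\Diamond A$ and $\Gamma,x:A\vdash u:B$ then $\Gamma\vdash\mathsf{letmap}\ x=t\ \mathsf{in}\ u:\Diamond B$; (ret) if $\Gamma\vdash t:A$ then $\Gamma\vdash\mathsf{ret}\,t:\Diamond A$; (let) if $\Gamma\vdash t:\Diamond A$ and $\Gamma,x:A\vdash u:\Diamond B$ then $\Gamma\vdash\mathsf{let}\ x=t\ \mathsf{in}\ u:\Diamond B$. The calculus $\lambda^{S}$ has the simply typed terms plus letmap; $\lambda^{SR}$ has letmap and ret; $\lambda^{SJ}$ has letmap and let. *)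

(* Defs.v *)
(* Variables are de Bruijn indices into the context (a list of types), which
   represents a context of distinct typed variables; index 0 is the most
   recently bound variable. *)
From Stdlib Require Import List.
Import ListNotations.

Inductive ty : Type :=
| TBase : ty
| TUnit : ty
| TProd : ty -> ty -> ty
| TArr  : ty -> ty -> ty
| TDia  : ty -> ty.

Inductive tm : Type :=
| tvar : nat -> tm
| tunit : tm
| tpair : tm -> tm -> tm
| tfst : tm -> tm
| tsnd : tm -> tm
| tlam : ty -> tm -> tm
| tapp : tm -> tm -> tm
| tletmap : tm -> tm -> tm    (* letmap x = t in u ; x bound in u *)
| tret : tm -> tm
| tlet : tm -> tm -> tm.      (* let x = t in u ; x bound in u *)

Inductive calculus : Type := lamS | lamSR | lamSJ.

Definition has_ret (c : calculus) : Prop :=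
  match c with lamSR => True | _ => False end.
Definition has_let (c : calculus) : Prop :=
  match c with lamSJ => True | _ => False end.

Definition ctx := list ty.

Inductive has_type (c : calculus) : ctx -> tm -> ty -> Prop :=
| T_var : forall G n A, nth_error G n = Some A -> has_type c G (tvar n) A
| T_unit : forall G, has_type c G tunit TUnit
| T_pair : forall G t u A B,
    has_type c G t A -> has_type c G u B -> has_type c G (tpair t u) (TProd A B)
| T_fst : forall G t A B, has_type c G t (TProd A B) -> has_type c G (tfst t) A
| T_snd : forall G t A B, has_type c G t (TProd A B) -> has_type c G (tsnd t) B
| T_lam : forall G t A B,
    has_type c (A :: G) t B -> has_type c G (tlam A t) (TArr A B)
| T_app : forall G t u A B,
    has_type c G t (TArr A B) -> has_type c G u A -> has_type c G (tapp t u) B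
| T_letmap : forall G t u A B,
    has_type c G t (TDia A) -> has_type c (A :: G) u B ->
    has_type c G (tletmap t u) (TDia B)
| T_ret : forall G t A,
    has_ret c -> has_type c G t A -> has_type c G (tret t) (TDia A)
| T_let : forall G t u A B,
    has_let c -> has_type c G t (TDia A) -> has_type c (A :: G) u (TDia B) ->
    has_type c G (tlet t u) (TDia B).

(* Main.v *)
Require Import Defs.
From Stdlib Require Import List Lia.
Import ListNotations.

Section Sem.
Variable R : nat -> nat -> Prop.
Variable Bs : nat -> Prop.
Hypothesis Bmono : forall w w', w <= w' -> Bs w -> Bs w'.
Hypothesis Rle : forall w v, R w v -> w <= v.

Fixpoint sem (A : ty) (w : nat) : Prop :=
  match A with
  | TBase => Bs w
  | TUnit => True
  | TProd A B => sem A w /\ sem B w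
  | TArr A B => forall w', w <= w' -> sem A w' -> sem B w'
  | TDia A => forall w', w <= w' -> exists v, R w' v /\ sem A v
  end.

Lemma sem_mono : forall A w w', w <= w' -> sem A w -> sem A w'.
Proof.
  induction A; simpl; intros w w' H H0; eauto.
  - destruct H0; split; eauto.
  - intros; apply H0; [lia|auto].
  - intros; apply H0; lia.
Qed.

Fixpoint semctx (G : ctx) (w : nat) : Prop :=
  match G with [] => True | A :: G => sem A w /\ semctx G w end.

Lemma semctx_mono : forall G w w', w <= w' -> semctx G w -> semctx G w'.
Proof. induction G; simpl; intuition eauto using sem_mono. Qed.

Lemma semctx_nth : forall G n A w, nth_error G n = Some A -> semctx G w -> sem A w.
Proof.
  induction G; intros [|n] A0 w H H0; simpl in *; try discriminate.
  - inversion H; subst; tauto.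
  - eapply IHG; eauto; tauto.
Qed.

Lemma sound : forall c G t A, has_type c G t A ->
  (has_ret c -> forall w, R w w) ->
  (has_let c -> forall w v u, R w v -> R v u -> R w u) ->
  forall w, semctx G w -> sem A w.
Proof.
  intros c G t A H Hr Hl; induction H; intros w HG; simpl in *.
  - eapply semctx_nth; eauto.
  - auto.
  - split; auto.
  - apply (IHhas_type w HG).
  - apply (IHhas_type w HG).
  - intros w' Hw' Ha. apply IHhas_type. split; auto. eapply semctx_mono; eauto.
  - apply (IHhas_type1 w HG); auto.
  - intros w' Hw'. destruct (IHhas_type1 w HG w' Hw') as [v [Hv Ha]].
    exists v; split; auto. apply IHhas_type2. split; auto.
    eapply semctx_mono; [|eauto]. specialize (Rle _ _ Hv). lia.
  - intros w' Hw'. exists w'. split; auto. eapply sem_mono; eauto.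
  - intros w' Hw'. destruct (IHhas_type1 w HG w' Hw') as [v [Hv Ha]].
    assert (Hv' := Rle _ _ Hv).
    destruct (IHhas_type2 v (conj Ha (semctx_mono _ w v ltac:(lia) HG)) v (le_n _))
      as [z [Hu Hb]].
    exists z; split; eauto.
Qed.
End Sem.

Lemma noR : forall c t, (has_ret c -> False) ->
  ~ has_type c [] t (TArr TBase (TDia TBase)).
Proof.
  intros c t Hc H.
  assert (HS := sound (fun _ _ => False) (fun _ => True) ltac:(auto) ltac:(intros; contradiction)
     _ _ _ _ H ltac:(intros; contradiction) ltac:(intros; contradiction) 0 I).
  simpl in HS. destruct (HS 0 (le_n _) I 0 (le_n _)) as [v [[] _]].
Qed.

Lemma noJ : forall c t, (has_let c -> False) ->
  ~ has_type c [] t (TArr (TDia (TDia TBase)) (TDia TBase)).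
Proof.
  intros c t Hc H.
  assert (HS := sound (fun w v => v = w \/ v = S w) (fun w => 2 <= w)
     ltac:(intros ? ? ? ?; cbv beta in *; lia) ltac:(intros ? ? Hq; cbv beta in Hq; lia)
     _ _ _ _ H (fun _ w => or_introl eq_refl) ltac:(intros; contradiction) 0 I).
  simpl in HS.
  destruct (HS 0 (le_n _)) with (w' := 0) as [v [Hv Hb]].
  - intros w' _. exists (S w'). split; auto.
    intros w'' Hw''. exists (S w''). split; auto. lia.
  - lia.
  - destruct Hv; subst; lia.
Qed.

Theorem corollary5p3 :
  (forall t, ~ has_type lamS  [] t (TArr TBase (TDia TBase))) /\
  (forall t, ~ has_type lamSJ [] t (TArr TBase (TDia TBase))) /\
  (forall t, ~ has_type lamS  [] t (TArr (TDia (TDia TBase)) (TDia TBase))) /\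
  (forall t, ~ has_type lamSR [] t (TArr (TDia (TDia TBase)) (TDia TBase))).
Proof.
  repeat split; intro t; [apply noR|apply noR|apply noJ|apply noJ]; simpl; auto.
Qed.
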